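(* Let $Q$ be a finite quiver with $kQ$ of finite GK-dimension, and let $v,w$ be cyclic vertices. Then $\mathrm{Hom}_{\mathrm{QGr}\,kQ}(\pi^*\mathcal O_v,\pi^*\mathcal O_w)\neq0$ if and only if $v=w$. In particular $\pi^*\mathcal O_v\not\cong\pi^*\mathcal O_w$ for $v\neq w$.
   Context: $k$ is a field; $kQ$ is the path algebra graded by path length; $\mathrm{QGr}\,kQ=\mathrm{Gr}\,kQ/\mathrm{Tors}\,kQ$ with quotient functor $\pi^*$, where $\mathrm{Tors}$ consists of graded modules in which every element is annihilated by $(kQ)_{\ge n}$ for some $n$. With finite GK-dimension each cyclic vertex $v$ lies on a unique simple cycle $p=(v=v_0,a_1,\dots,a_n,v_n=v)$, and $\mathcal O_v=e_vkQ/\bigoplus p^m a_1\cdots a_i b\,kQ$ (sum over $m\ge0$, $0\le i<n$, arrows $b\neq a_{i+1}$ with source $v_i$), a graded module with basis the images of $p^m a_1\cdots a_i$. *)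

(* Defs.v *)
From HB Require Import structures.
From mathcomp Require Import all_boot all_order all_algebra.
Set Implicit Arguments. Unset Strict Implicit. Unset Printing Implicit Defensive.
Import Order.TTheory GRing.Theory Num.Theory.
Local Open Scope ring_scope.

(* A finite quiver. Paths are written left to right: a1 a2 ... with
   qtgt a_i = qsrc a_{i+1}. *)
Record quiver := Quiver {
  qV : finType;
  qA : finType;
  qsrc : qA -> qV;
  qtgt : qA -> qV }.

Definition composable (Q : quiver) (s : seq (qA Q)) : bool :=
  sorted (fun a b => qtgt a == qsrc b) s.

(* number of paths of length m in Q (= dim (kQ)_m) *)
Definition npaths (Q : quiver) (m : nat) : nat :=
  if m is 0 then #|qV Q|
  else #|[set t : m.-tuple (qA Q) | composable (tval t)]|.

(* kQ (graded by path length, generated by kQ_0 + kQ_1) has finite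
   GK-dimension iff dim (kQ)_{<= n} grows at most polynomially in n. *)
Definition finite_GKdim (Q : quiver) : Prop :=
  exists C e : nat, forall n : nat,
    (\sum_(m < n.+1) npaths Q m <= C * n.+1 ^ e)%N.

Definition simple_cycle (Q : quiver) (v : qV Q) (c : seq (qA Q)) : bool :=
  [&& c != [::], composable c,
      omap (@qsrc Q) (ohead c) == Some v,
      omap (@qtgt Q) (ohead (rev c)) == Some v &
      uniq (map (@qsrc Q) c)].

(* Graded right kQ-modules, described as representations:
   gcomp d u = M_d e_u, and right multiplication by an arrow a maps
   M_d e_u to M_{d+1} e_{tgt a}; it is zero unless u = src a. *)
Record grmod (K : fieldType) (Q : quiver) := GrMod {
  gcomp : int -> qV Q -> lmodType K;
  gact : forall (d : int) (u : qV Q) (a : qA Q),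
           gcomp d u -> gcomp (d + 1) (qtgt a);
  gact_lin : forall d u a, linear (@gact d u a);
  gact_src : forall d u a x, qsrc a != u -> @gact d u a x = 0 }.

Arguments gcomp {K Q} g d u : rename.
Arguments gact {K Q} g d u a x : rename.

Section Modules.
Variables (K : fieldType) (Q : quiver).

Definition gsubset (M : grmod K Q) :=
  forall (d : int) (u : qV Q), gcomp M d u -> Prop.

Definition gincl (M : grmod K Q) (S T : gsubset M) : Prop :=
  forall d u x, S d u x -> T d u x.

Definition is_submod (M : grmod K Q) (S : gsubset M) : Prop :=
  [/\ (forall d u, S d u 0),
      (forall d u (k : K) x y, S d u x -> S d u y -> S d u (k *: x + y)) &
      (forall d u a x, S d u x -> S (d + 1) (qtgt a) (gact M d u a x))].

(* killed_in S n x : x . q lies in S for every path q of length n *)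
Fixpoint killed_in (M : grmod K Q) (S : gsubset M) (n : nat) :
    forall d u, gcomp M d u -> Prop :=
  match n with
  | 0 => fun d u x => S d u x
  | n'.+1 => fun d u x =>
      forall a : qA Q, killed_in S n' (gact M d u a x)
  end.

Definition gzero (M : grmod K Q) : gsubset M := fun d u x => x = 0.

(* M / S is torsion: every element is annihilated by (kQ)_{>= n} mod S *)
Definition torsion_quot (M : grmod K Q) (S : gsubset M) : Prop :=
  forall d u (x : gcomp M d u), exists n, killed_in S n x.

Definition torsion_sub (M : grmod K Q) (S : gsubset M) : Prop :=
  forall d u (x : gcomp M d u), S d u x -> exists n, killed_in (@gzero M) n x.

(* f (a family of linear maps M_d e_u -> N_d e_u), restricted to M',
   induces a degree-0 graded homomorphism M' -> N / N' *)
Definition grhom_mod (M N : grmod K Q) (M' : gsubset M) (N' : gsubset N)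
    (f : forall d u, gcomp M d u -> gcomp N d u) : Prop :=
  (forall d u, linear (f d u)) /\
  (forall d u a x, M' d u x ->
     N' (d + 1) (qtgt a)
        (f (d + 1) (qtgt a) (gact M d u a x) - gact N d u a (f d u x))).

(* Hom_{QGr kQ}(pi^* M, pi^* N) = colim Hom_{Gr kQ}(M', N / N'), over graded
   submodules M' <= M with M/M' torsion and torsion submodules N' <= N.
   It is nonzero iff some representative does not become zero after
   shrinking M' and enlarging N'. *)
Definition QHom_nonzero (M N : grmod K Q) : Prop :=
  exists (M' : gsubset M) (N' : gsubset N)
         (f : forall d u, gcomp M d u -> gcomp N d u),
    [/\ is_submod M' /\ torsion_quot M', is_submod N' /\ torsion_sub N',
        grhom_mod M' N' f &
        ~ (exists (M'' : gsubset M) (N'' : gsubset N),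
             [/\ is_submod M'' /\ gincl M'' M', torsion_quot M'',
                 is_submod N'' /\ gincl N' N'', torsion_sub N'' &
                 forall d u x, M'' d u x -> N'' d u (f d u x)])].

(* The module O_v attached to the simple cycle c = [:: a_1; ...; a_n] at v:
   its degree-d part (d >= 0) is one-dimensional, spanned by the image of
   p^m a_1 ... a_i (d = m n + i, 0 <= i < n), sitting at vertex v_i;
   right multiplication by a_{i+1} sends it to the next basis vector and
   every other arrow acts by zero. *)
Definition Odim (c : seq (qA Q)) (d : int) (u : qV Q) : nat :=
  if d is Posz m then omap (@qsrc Q) (onth c (m %% size c)) == Some u
  else false.

Definition Ocond (c : seq (qA Q)) (d : int) (u : qV Q) (a : qA Q) : bool :=
  if d is Posz m then (onth c (m %% size c) == Some a) && (qsrc a == u)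
  else false.

Definition Oact (c : seq (qA Q)) (d : int) (u : qV Q) (a : qA Q)
    (x : 'rV[K]_(Odim c d u)) : 'rV[K]_(Odim c (d + 1) (qtgt a)) :=
  x *m (if Ocond c d u a then const_mx 1 else 0).

Lemma Oact_lin c d u a : linear (@Oact c d u a).
Proof. by move=> k x y; rewrite /Oact mulmxDl scalemxAl. Qed.

Lemma Oact_src c d u a x : qsrc a != u -> @Oact c d u a x = 0.
Proof.
move=> h; rewrite /Oact /Ocond; case: d x => [m|m] x;
  last by rewrite mulmx0.
by rewrite (negbTE h) andbF mulmx0.
Qed.

Definition Omod (c : seq (qA Q)) : grmod K Q :=
  @GrMod K Q (fun d u => 'rV[K]_(Odim c d u)) (@Oact c)
    (@Oact_lin c) (@Oact_src c).

End Modules.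

(* Main.v *)
Require Import Defs.
From HB Require Import structures.
From mathcomp Require Import all_boot all_order all_algebra zify.
Set Implicit Arguments. Unset Strict Implicit. Unset Printing Implicit Defensive.


Lemma exp_beats (B e : nat) : exists j, B + e * j < 2 ^ j.
Proof.
set t := B + 2 * e + 1.
exists (2 * t).
have ht : t < 2 ^ t by apply: ltn_expl.
have -> : 2 ^ (2 * t) = 2 ^ t * 2 ^ t by rewrite mulnC expnM.
move: ht; set P := 2 ^ t => ht.
rewrite /t in ht *. nia.
Qed.

Lemma growth_false (C e L : nat) :
  0 < L -> (forall k, 0 < k -> 2 ^ k <= C * (k * L).+1 ^ e) -> False.
Proof.
move=> L0 H.
set B := C * (L.+1) ^ e.
have [j hj] := exp_beats B e.
have := H (2 ^ j) (expn_gt0 2 j).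
have h1 : (2 ^ j * L).+1 ^ e <= (2 ^ j * L.+1) ^ e.
  case: e {hj B} H => [|e] H; first by [].
  rewrite leq_exp2r //; have := expn_gt0 2 j; nia.
rewrite expnMn in h1.
have hB : B < 2 ^ B by apply: ltn_expl.
move=> h2.
have h3 : 2 ^ 2 ^ j < 2 ^ (B + e * j).
  rewrite expnD mulnC expnM.
  apply: (leq_ltn_trans h2).
  apply: (leq_ltn_trans (leq_mul (leqnn C) h1)).
  rewrite (mulnC ((2 ^ j) ^ e)) mulnA -/B -!expnM (mulnC j e) mulnC.
  by rewrite ltn_pmul2l // expn_gt0.
rewrite ltn_exp2l // in h3.
by move: hj; rewrite ltnNge (ltnW h3).
Qed.
Section Walks.
Variable Q : quiver.
Local Notation A := (qA Q).

Definition cw (u : qV Q) (s : seq A) : bool :=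
  composable s && (if s is x :: p then (qsrc x == u) && (qtgt (last x p) == u)
                   else true).

Lemma cw_cat u s1 s2 : cw u s1 -> cw u s2 -> cw u (s1 ++ s2).
Proof.
case: s1 => [//|x p]; case: s2 => [|y q]; first by rewrite cats0.
rewrite /cw /composable /= => /andP[hp /andP[hx hl]] /andP[hq /andP[hy hl']].
rewrite cat_path hp /= hx last_cat /= hl' /= andbT.
by rewrite (eqP hl) (eqP hy) eqxx.
Qed.

Lemma cw_flatten u ss : all (cw u) ss -> cw u (flatten ss).
Proof.
elim: ss => [//|s ss IH] /= /andP[h1 h2].
exact: cw_cat h1 (IH h2).
Qed.

Lemma flatten_inj (L : nat) (f : bool -> seq A) :
  injective f -> (forall b, size (f b) = L) ->
  forall s1 s2 : seq bool, size s1 = size s2 ->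
  flatten (map f s1) = flatten (map f s2) -> s1 = s2.
Proof.
move=> fi fs; elim=> [|b s1 IH] [|b' s2] //= [hs] he.
have h1 : take L (f b ++ flatten (map f s1)) = take L (f b' ++ flatten (map f s2)) by rewrite he.
have h2 : drop L (f b ++ flatten (map f s1)) = drop L (f b' ++ flatten (map f s2)) by rewrite he.
rewrite !take_size_cat ?fs // in h1.
rewrite !drop_size_cat ?fs // in h2.
by rewrite (fi _ _ h1) (IH _ hs h2).
Qed.

Lemma size_flatten_const (L : nat) (f : bool -> seq A) (s : seq bool) :
  (forall b, size (f b) = L) -> size (flatten (map f s)) = (size s * L)%N.
Proof.
move=> fs; elim: s => [//|b s IH] /=.
by rewrite size_cat IH fs mulSn.
Qed.

Lemma npaths_lower u (X Y : seq A) (L k : nat) :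
  cw u X -> cw u Y -> size X = L -> size Y = L -> 0 < L -> X != Y -> 0 < k ->
  (2 ^ k <= npaths Q (k * L))%N.
Proof.
move=> cX cY sX sY L0 XY k0.
have kL0 : 0 < k * L by rewrite muln_gt0 k0.
set f := fun b : bool => if b then X else Y.
have fs : forall b, size (f b) = L by case.
have fi : injective f by case; case=> //= h; move: XY; rewrite h eqxx.
have szg : forall t : k.-tuple bool, size (flatten (map f t)) == k * L.
  by move=> t; rewrite (size_flatten_const _ fs) size_tuple.
pose g (t : k.-tuple bool) : (k * L).-tuple A := Tuple (szg t).
have gi : injective g.
  move=> t1 t2 /(congr1 val) /= h; apply: val_inj.
  by apply: (flatten_inj fi fs _ h); rewrite !size_tuple.
have -> : npaths Q (k * L) = #|[set t : (k * L).-tuple A | composable t]|.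
  by move: kL0; rewrite /npaths; case: (k * L).
rewrite -[2]card_bool -card_tuple -(card_imset _ gi).
apply: subset_leq_card; apply/subsetP => t /imsetP[b _ ->].
rewrite inE /=.
have : cw u (flatten (map f b)).
  apply: cw_flatten; apply/allP => s /mapP[bb _ ->]; by case: bb.
by case/andP.
Qed.

Lemma ohead_rev (x : A) p : ohead (rev (x :: p)) = Some (last x p).
Proof. by rewrite lastI rev_rcons. Qed.

Lemma simple_cw u c : simple_cycle u c -> cw u c.
Proof.
case: c => [|x p]; rewrite /simple_cycle; first by rewrite eqxx.
case/and5P=> _ hc h1 h2 _; rewrite /cw hc /=.
move: h2; rewrite ohead_rev /= => h2.
by move: h1 h2 => /eqP[->] /eqP[->]; rewrite !eqxx.
Qed.

Lemma powers_neq (u : qV Q) (c1 c2 : seq A) : simple_cycle u c1 -> simple_cycle u c2 ->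
  size c1 <= size c2 -> c1 != c2 ->
  flatten (nseq (size c2) c1) != flatten (nseq (size c1) c2).
Proof.
move=> s1 s2 le ne; apply/eqP => he.
have n1 : 0 < size c1 by case: (c1) s1; rewrite /simple_cycle ?eqxx.
have n2 : 0 < size c2 by case: (c2) s2; rewrite /simple_cycle ?eqxx.
have := congr1 (take (size c1)) he.
case E1: (size c2) n2 => [//|m2] _; case E2: (size c1) n1 => [//|m1] _ /=.
rewrite -{1}E2 take_size_cat // takel_cat; last by rewrite -E2.
rewrite E2 E1 ltnS in le.
case: ltngtP le => // [lt|eq] _ h; last first.
  by move: ne; rewrite {1}h eq -E1 take_size eqxx.
(* c1 proper prefix of c2 *)
have hc2 : c2 = c1 ++ drop (size c1) c2 by rewrite E2 {1}h cat_take_drop.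
case Ed: (drop (size c1) c2) hc2 => [|y q] hc2.
  by move: (size_drop (size c1) c2); rewrite Ed E1 E2 => /esym/eqP; rewrite subn_eq0 leqNgt ltnS lt.
have cw1 := simple_cw s1.
move: s2; rewrite /simple_cycle hc2 => /and5P[_ hcomp _ _ hu].
clear -cw1 hcomp hu E2; case: c1 E2 cw1 hcomp hu => [//|x p] _.
rewrite /cw /composable /= => /andP[_ /andP[hx hl]].
rewrite cat_path /= => /and3P[_ hy _].
rewrite map_cat cat_uniq /= => /and5P[hn _ _ _ _].
move/negP: hn; apply; rewrite mem_cat inE; apply/orP; right; apply/orP; left.
by rewrite -(eqP hy) (eqP hl) (eqP hx).
Qed.

Lemma size_flatten_nseq n (s : seq A) : size (flatten (nseq n s)) = (n * size s)%N.
Proof. by elim: n => //= n IH; rewrite size_cat IH mulSn. Qed.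

Lemma cycle_unique (u : qV Q) (c1 c2 : seq A) : finite_GKdim Q ->
  simple_cycle u c1 -> simple_cycle u c2 -> c1 = c2.
Proof.
move=> [C [e H]] s1 s2; apply/eqP; apply/negPn/negP => ne.
set X := flatten (nseq (size c2) c1); set Y := flatten (nseq (size c1) c2).
have hXY : X != Y.
  case: (leqP (size c1) (size c2)) => h; first exact: (powers_neq s1 s2 h ne).
  by rewrite eq_sym; apply: (powers_neq s2 s1 (ltnW h)); rewrite eq_sym.
have n1 : 0 < size c1 by case: (c1) s1; rewrite /simple_cycle ?eqxx.
have n2 : 0 < size c2 by case: (c2) s2; rewrite /simple_cycle ?eqxx.
set L := (size c1 * size c2)%N.
have sX : size X = L by rewrite /X size_flatten_nseq mulnC.
have sY : size Y = L by rewrite /Y size_flatten_nseq.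
have cX : cw u X by apply: cw_flatten; rewrite all_nseq (simple_cw s1) orbT.
have cY : cw u Y by apply: cw_flatten; rewrite all_nseq (simple_cw s2) orbT.
apply: (@growth_false C e L); first by rewrite muln_gt0 n1.
move=> k k0; apply: leq_trans (npaths_lower cX cY sX sY _ hXY k0) _.
  by rewrite muln_gt0 n1.
apply: leq_trans (H (k * L)).
by rewrite big_ord_recr /= leq_addl.
Qed.

End Walks.
Section Cyc.
Variable Q : quiver.
Local Notation A := (qA Q).
Local Notation E := (fun a b : A => qtgt a == qsrc b).



Lemma sc_cons (v : qV Q) (x : A) p : simple_cycle v (x :: p) =
  [&& cycle E (x :: p), qsrc x == v & uniq (map (@qsrc Q) (x :: p))].
Proof.
rewrite /simple_cycle ohead_rev /composable /= rcons_path.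
case: (path _ x p) => //=.
rewrite !(inj_eq (@Some_inj _)).
case: (qsrc x =P v) => [->|nv] /=; first by case: (_ == v).
by rewrite !andbF.
Qed.

Lemma sc_rot (v : qV Q) c i a : simple_cycle v c -> onth c i = Some a ->
  simple_cycle (qsrc a) (rot i c).
Proof.
move=> sc hi.
have lt : i < size c by rewrite -onthTE hi.
have hn : nth a c i = a by apply: onth_nth.
have -> : rot i c = a :: (drop i.+1 c ++ take i c).
  by rewrite /rot (drop_nth a lt) hn.
rewrite sc_cons -(_ : rot i c = a :: (drop i.+1 c ++ take i c)); last first.
  by rewrite /rot (drop_nth a lt) hn.
case: c sc lt hi hn => [//|x p]; rewrite sc_cons => /and3P[hc _ hu] _ _ _.
by rewrite rot_cycle hc eqxx map_rot rot_uniq hu.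
Qed.

Lemma cycle_step (v : qV Q) c k a : simple_cycle v c ->
  onth c (k %% size c) = Some a ->
  exists2 b, onth c (k.+1 %% size c) = Some b & qtgt a = qsrc b.
Proof.
case: c => [|x p]; first by rewrite /simple_cycle eqxx.
rewrite sc_cons => /and3P[hc _ _] hk.
set n := size (x :: p).
have n0 : 0 < n by [].
set i := k %% n.
have lt : i < n by apply: ltn_pmod.
have e1 : k.+1 %% n = i.+1 %% n by rewrite /i -(addn1 k) -(addn1 (k %% n)) modnDml.
move: hc; rewrite /cycle => /(pathP a) /(_ i); rewrite size_rcons => /(_ lt).
have ha : nth a (x :: p) i = a by apply: onth_nth.
have -> : nth a (x :: rcons p x) i = a.
  rewrite -ha /= -/i; case: (i) lt => //= j lj.
  have jp : j < size p by move: lj; rewrite /n /= ltnS.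
  by rewrite nth_rcons jp (set_nth_default a _ jp).
have hb : onth (x :: p) (k.+1 %% n) = Some (nth a (x :: p) (k.+1 %% n)).
  have : k.+1 %% n < size (x :: p) by apply: ltn_pmod.
  rewrite -onthTE; case E1: onth => [b|] // _.
  by rewrite (@onth_nth _ a b _ _ E1).
move=> hE; exists (nth a (x :: p) (k.+1 %% n)) => //.
rewrite e1; move: hE; rewrite nth_rcons.
case: (ltnP i (size p)) => hip.
  by rewrite (modn_small (m := i.+1)) ?ltnS // => /eqP.
have ei : i = size p by apply/eqP; rewrite eqn_leq hip andbT -ltnS.
by rewrite ei eqxx (_ : (size p).+1 = n) // modnn /= => /eqP.
Qed.
End Cyc.

Import GRing.Theory.
Local Open Scope ring_scope.

Section Mod.
Variables (K : fieldType) (Q : quiver).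
Local Notation A := (qA Q).

Lemma rv0 (n : nat) (x : 'rV[K]_n) : n = 0%N -> x = 0.
Proof. by move=> e; subst n; apply: thinmx0. Qed.

Lemma mul_const_nz n1 n2 (x : 'rV[K]_n1) : (n1 <= 1)%N -> x != 0 -> (0 < n2)%N ->
  x *m (const_mx 1 : 'M_(n1, n2)) != 0.
Proof.
case: n1 x => [|[|//]] x _ hx n2p; first by rewrite (rv0 x) ?eqxx in hx.
apply/eqP => h.
have := congr1 (fun M : 'M_(1, n2) => M 0 (Ordinal n2p)) h.
rewrite !mxE big_ord1 mxE mulr1 => h0.
move/eqP: hx; apply; apply/rowP => j; rewrite ord1 mxE h0.
by [].
Qed.

Lemma odim_nz (c : seq A) d u (x : 'rV[K]_(Odim c d u)) : x != 0 -> (0 < Odim c d u)%N.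
Proof. by move=> hx; rewrite lt0n; apply/eqP => e; rewrite (rv0 x e) eqxx in hx. Qed.

Lemma odim_pos (c : seq A) d u : (0 < Odim c d u)%N ->
  exists m : nat, d = Posz m /\ exists2 a, onth c (m %% size c) = Some a & qsrc a = u.
Proof.
case: d => [m|m] //=; rewrite /Odim lt0n eqb0 negbK.
case E: onth => [a|] //= /eqP[<-]; by exists m; split => //; exists a.
Qed.


Lemma step_nz (v : qV Q) (c : seq A) d u (x : 'rV[K]_(Odim c d u)) :
  simple_cycle v c -> x != 0 -> exists a, @Oact K Q c d u a x != 0.
Proof.
move=> sc hx.
have [m [ed [a ha hau]]] := odim_pos (odim_nz hx).
subst d.
exists a.
rewrite /Oact /Ocond ha eqxx hau eqxx /=.
apply: mul_const_nz => //; first by rewrite /Odim leq_b1.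
have [b hb hab] := cycle_step sc ha.
rewrite addn1.
by rewrite /Odim hb /= hab eqxx.
Qed.

Lemma walk (v : qV Q) (c : seq A) (S : gsubset (Omod K c)) :
  simple_cycle v c ->
  forall n d u (x : gcomp (Omod K c) d u), x != 0 -> killed_in S n x ->
  exists d' u' (y : gcomp (Omod K c) d' u'), y != 0 /\ S d' u' y.
Proof.
move=> sc; elim=> [|n IH] d u x hx /=; first by move=> h; exists d, u, x.
move=> h; have [a ha] := step_nz sc hx.
exact: IH _ _ _ ha (h a).
Qed.

End Mod.

Lemma f0 (K : fieldType) (U V : lmodType K) (f : U -> V) : linear f -> f 0 = 0.
Proof.
move=> fl; have h := fl 1 0 0; rewrite !scale1r addr0 in h.
by apply: (@addrI _ (f 0)); rewrite addr0 -{1}h.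
Qed.

Lemma const_nz (K : fieldType) n : (0 < n)%N -> (const_mx 1 : 'rV[K]_n) != 0.
Proof.
move=> np; apply/eqP => /matrixP/(_ 0 (Ordinal np)); rewrite !mxE => /eqP.
by rewrite oner_eq0.
Qed.

Unset Implicit Arguments.
Theorem lemma5p2 (K : fieldType) (Q : quiver) (v w : qV Q)
    (cv cw : seq (qA Q)) :
  finite_GKdim Q ->
  simple_cycle v cv -> simple_cycle w cw ->
  (QHom_nonzero (Omod K cv) (Omod K cw) <-> v = w).
Proof.
move=> gk sv sw; split.
- case=> M' [N' [f [[subM tqM] [subN tsN] [flin fh] hneg]]].
  case: (v =P w) => // nvw; exfalso; apply: hneg.
  exists M', N'; split => //; try by split.
  move=> d u x _.
  suff -> : f d u x = 0 by case: subN.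
  case: (posnP (Odim cw d u)) => [hw|hw]; first exact: rv0.
  case: (posnP (Odim cv d u)) => [hv|hv].
    by have -> : x = 0 := rv0 (x : 'rV[K]_(Odim cv d u)) hv; apply: f0.
  have [m [ed [a ha hau]]] := odim_pos hv.
  have [m' [ed' [b hb hbu]]] := odim_pos hw.
  rewrite ed in ed'; case: ed' => em; subst m'.
  have r1 := sc_rot sv ha; have r2 := sc_rot sw hb.
  rewrite hau -hbu in r1.
  have er := cycle_unique gk r1 r2.
  have es : size cv = size cw by rewrite -(size_rot (m %% size cv) cv) er size_rot.
  rewrite es in er; have ec := rot_inj er; subst cw.
  move: sv sw => /and5P[_ _ h1 _ _] /and5P[_ _ h2 _ _].
  by case: nvw; move: h1 h2 => /eqP -> /eqP [].
- move=> evw; subst w; have ecw := cycle_unique gk sv sw; subst cw.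
  exists (fun _ _ _ => True), (@gzero K Q (Omod K cv)), (fun d u x => x).
  split.
  + split; [by split | by move=> d u x; exists 0%N].
  + split; first split.
    * by [].
    * by move=> d u k x y -> ->; rewrite scaler0 addr0.
    * by move=> d u a x ->; rewrite /= /Oact mul0mx.
    * by move=> d u x hx; exists 0%N.
  + split; first by move=> d u k x y.
    by move=> d u a x _; rewrite /gzero subrr.
  + move=> [M'' [N'' [[sM'' _] tq [sN'' incN] ts hf]]].
    have p0 : (0 < Odim cv 0 v)%N.
      move: sv => /and5P[_ _ h1 _ _].
      by rewrite /Odim /= mod0n; case: (cv) h1 => [|x p] //= ->.
    pose x0 : gcomp (Omod K cv) 0 v := const_mx 1.
    have x0nz : x0 != 0 by apply: const_nz.
    have [n hn] := tq 0 v x0.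
    have [d1 [u1 [y [ynz hy]]]] := walk sv x0nz hn.
    have [m hm] := ts _ _ _ (hf _ _ _ hy).
    have [d2 [u2 [z [znz hz]]]] := walk sv ynz hm.
    by rewrite hz eqxx in znz.
Qed.
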